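(* Let $n\geq 3$ and let $\rho: B_n \rightarrow GL_n(\mathbb{C})$ be a non-trivial homogeneous $2$-local representation of $B_n$. Let $\rho': SM_n \rightarrow M_n(\mathbb{C})$ be a non-trivial homogeneous $2$-local extension of $\rho$ to $SM_n$. Then $\rho'$ is equivalent to one of the following three representations, where for each $1\le i\le n-1$ we write $D_i(X)$ for the block diagonal matrix $\mathrm{diag}(I_{i-1},X,I_{n-i-1})$ with $X\in M_2(\mathbb{C})$: (1) $\rho'_1$ with $\rho'_1(\sigma_i)=\rho_1(\sigma_i)$ and $\rho'_1(\tau_i)=D_i\begin{pmatrix} 1-(1-a)(1-t) & \frac{1-a}{c}(1-t)\\ c(1-t) & t\end{pmatrix}$, where $a,c,t\in\mathbb{C}$, $a\neq 0$, $c\neq 0$; (2) $\rho'_2$ with $\rho'_2(\sigma_i)=\rho_2(\sigma_i)$ and $\rho'_2(\tau_i)=D_i\begin{pmatrix} x & \frac{1-d}{c}(1-x)\\ c(1-x) & 1-(1-d)(1-x)\end{pmatrix}$, where $c,d,x\in\mathbb{C}$, $c\neq 0$, $d\neq 0$; (3) $\rho'_3$ with $\rho'_3(\sigma_i)=\rho_3(\sigma_i)$ and $\rho'_3(\tau_i)=D_i\begin{pmatrix} x & y\\ \frac{cy}{b} & x\end{pmatrix}$, where $b,c,x,y\in\mathbb{C}$, $b\neq 0$, $c\neq 0$. Here $\rho_1(\sigma_i)=D_i\begin{pmatrix} a&\frac{1-a}{c}\\ c&0\end{pmatrix}$ with $c\neq 0$, $a\neq 1$; $\rho_2(\sigma_i)=D_i\begin{pmatrix}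 0&\frac{1-d}{c}\\ c&d\end{pmatrix}$ with $c\neq0$, $d\neq 1$; and $\rho_3(\sigma_i)=D_i\begin{pmatrix} 0&b\\ c&0\end{pmatrix}$ with $bc\neq 0$ (for all $1\le i\le n-1$). Moreover, if $\rho'(\tau_i)$ is invertible for all $1\leq i\leq n-1$, then $\rho'$ is a representation of the singular braid group $SB_n$.
   Context: The braid group $B_n$ has generators $\sigma_1,\dots,\sigma_{n-1}$ with relations $\sigma_i\sigma_{i+1}\sigma_i=\sigma_{i+1}\sigma_i\sigma_{i+1}$ ($1\le i\le n-2$) and $\sigma_i\sigma_j=\sigma_j\sigma_i$ ($|i-j|\ge2$). The singular braid monoid $SM_n$ is the monoid generated by $\sigma_1^{\pm1},\dots,\sigma_{n-1}^{\pm1},\tau_1,\dots,\tau_{n-1}$ subject to $\sigma_i\sigma_i^{-1}=\sigma_i^{-1}\sigma_i=1$, the braid relations above, and the relations $\tau_i\tau_j=\tau_j\tau_i$ and $\tau_i\sigma_j=\sigma_j\tau_i$ for $|i-j|\ge 2$, $\tau_i\sigma_i=\sigma_i\tau_i$ for $1\le i\le n-1$, and $\sigma_i\sigma_{i+1}\tau_i=\tau_{i+1}\sigma_i\sigma_{i+1}$, $\sigma_{i+1}\sigma_i\tau_{i+1}=\tau_i\sigma_{i+1}\sigma_i$ for $1\le i\le n-2$. The singular braid group $SB_n$ is the group with generators $\sigma_i,\tau_i$ ($1\le i\le n-1$) and the same relations (into which $SM_n$ embeds). A representation of $SM_n$ is a monoid homomorphism into a matrix monoid $M_m(\mathbb{C})$.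 A representation $\rho:B_n\to GL_m(\mathbb{C})$ is homogeneous $k$-local, with $k=m-n+2$, if there is $M\in M_k(\mathbb{C})$ such that $\rho(\sigma_i)=\mathrm{diag}(I_{i-1},M,I_{n-i-1})$ for all $1\le i\le n-1$. A homogeneous $k$-local extension of such $\rho$ to $SM_n$ is a representation $\rho':SM_n\to M_m(\mathbb{C})$ with $\rho'(\sigma_i)=\rho(\sigma_i)$ and $\rho'(\tau_i)=\mathrm{diag}(I_{i-1},N,I_{n-i-1})$ for all $i$, for a single matrix $N\in M_k(\mathbb{C})$. ''Non-trivial'' means not sending every generator $\sigma_i$ to the identity. Two representations are equivalent if they are conjugate by a fixed invertible matrix. *)

(* Defs.v *)
From mathcomp Require Import all_boot all_algebra.
From mathcomp Require Import reals.
From mathcomp.real_closed Require Export complex.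
Set Implicit Arguments. Unset Strict Implicit. Unset Printing Implicit Defensive.
Import GRing.Theory.
Local Open Scope ring_scope.

Section Defs.
Variable F : comUnitRingType.

(* blockD n i X = diag(I_{i-1}, X, I_{n-i-1}) for 1 <= i <= n-1, X a 2x2 matrix:
   X occupies rows/columns i-1 and i (0-based). *)
Definition blockD (n i : nat) (X : 'M[F]_2) : 'M[F]_n :=
  \matrix_(r < n, s < n)
    if [&& i.-1 <= r, r <= i, i.-1 <= s & s <= i]%N
    then X (inord (r - i.-1)) (inord (s - i.-1))
    else (r == s)%:R.

Definition braid_rels (n : nat) (S : nat -> 'M[F]_n) : Prop :=
  (forall i, (1 <= i)%N -> (i <= n - 2)%N ->
     S i *m S i.+1 *m S i = S i.+1 *m S i *m S i.+1) /\
  (forall i j, (1 <= i <= n - 1)%N -> (1 <= j <= n - 1)%N ->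
     ((i.+1 < j) || (j.+1 < i))%N -> S i *m S j = S j *m S i).

(* A representation of B_n into GL_n: invertible images satisfying the braid
   relations (B_n is presented by these generators and relations). *)
Definition braid_rep (n : nat) (S : nat -> 'M[F]_n) : Prop :=
  (forall i, (1 <= i <= n - 1)%N -> S i \in unitmx) /\ braid_rels S.

Definition singular_rels (n : nat) (S T : nat -> 'M[F]_n) : Prop :=
  (forall i j, (1 <= i <= n - 1)%N -> (1 <= j <= n - 1)%N ->
     ((i.+1 < j) || (j.+1 < i))%N ->
       T i *m T j = T j *m T i /\ T i *m S j = S j *m T i) /\
  (forall i, (1 <= i <= n - 1)%N -> T i *m S i = S i *m T i) /\
  (forall i, (1 <= i)%N -> (i <= n - 2)%N ->
     S i *m S i.+1 *m T i = T i.+1 *m S i *m S i.+1 /\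
     S i.+1 *m S i *m T i.+1 = T i *m S i.+1 *m S i).

(* A monoid representation of SM_n into M_n: sigma_i^{+-1} must go to mutually
   inverse matrices, so images of sigma_i are invertible; tau_i images arbitrary. *)
Definition SM_rep (n : nat) (S T : nat -> 'M[F]_n) : Prop :=
  braid_rep S /\ singular_rels S T.

Definition SB_rep (n : nat) (S T : nat -> 'M[F]_n) : Prop :=
  (forall i, (1 <= i <= n - 1)%N -> S i \in unitmx /\ T i \in unitmx) /\
  braid_rels S /\ singular_rels S T.

Definition nontrivial (n : nat) (S : nat -> 'M[F]_n) : Prop :=
  exists i, (1 <= i <= n - 1)%N /\ S i != 1%:M.

Definition equiv_SM (n : nat) (S T S' T' : nat -> 'M[F]_n) : Prop :=
  exists P : 'M[F]_n, P \in unitmx /\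
    forall i, (1 <= i <= n - 1)%N ->
      S i = P *m S' i *m invmx P /\ T i = P *m T' i *m invmx P.
End Defs.

Section Families.
Variable F : fieldType.
Definition mx22 (p q r' s' : F) : 'M[F]_2 :=
  \matrix_(r < 2, s < 2)
    if r == 0 :> nat then (if s == 0 :> nat then p else q)
    else (if s == 0 :> nat then r' else s').
Definition rho1 (a c : F) : 'M[F]_2 :=
  mx22 (a) ((1 - a) / c) (c) (0).
Definition tau1 (a c t : F) : 'M[F]_2 :=
  mx22 (1 - (1 - a) * (1 - t)) ((1 - a) / c * (1 - t)) (c * (1 - t)) (t).
Definition rho2 (c d : F) : 'M[F]_2 :=
  mx22 (0) ((1 - d) / c) (c) (d).
Definition tau2 (c d x : F) : 'M[F]_2 :=
  mx22 (x) ((1 - d) / c * (1 - x)) (c * (1 - x)) (1 - (1 - d) * (1 - x)).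
Definition rho3 (b c : F) : 'M[F]_2 :=
  mx22 (0) (b) (c) (0).
Definition tau3 (b c x y : F) : 'M[F]_2 :=
  mx22 (x) (y) (c * y / b) (x).
End Families.

(* Main.v *)
Require Import Defs.
From mathcomp Require Import all_boot all_algebra.
From mathcomp Require Import reals.
From mathcomp.real_closed Require Import complex.
From mathcomp Require Import zify ring.
Import GRing.Theory.
Local Open Scope ring_scope.

Module Helpers.
Local Set Implicit Arguments. Local Unset Strict Implicit.


Section H.
Variable F : fieldType.

Definition mx33 (a b c d e f g h k : F) : 'M[F]_3 :=
  \matrix_(r < 3, s < 3) nth 0 (nth [::] [:: [:: a; b; c]; [:: d; e; f]; [:: g; h; k]] r) s.

Lemma mx33_mul a b c d e f g h k a' b' c' d' e' f' g' h' k' :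
  mx33 a b c d e f g h k *m mx33 a' b' c' d' e' f' g' h' k' =
  mx33 (a*a'+b*d'+c*g') (a*b'+b*e'+c*h') (a*c'+b*f'+c*k')
       (d*a'+e*d'+f*g') (d*b'+e*e'+f*h') (d*c'+e*f'+f*k')
       (g*a'+h*d'+k*g') (g*b'+h*e'+k*h') (g*c'+h*f'+k*k').
Proof.
apply/matrixP => r s; rewrite !mxE !big_ord_recr big_ord0 /= !mxE /=.
case: r => [[|[|[|r]]] hr] //; case: s => [[|[|[|s]]] hs] //=; ring.
Qed.

Lemma mx33_inj a b c d e f g h k a' b' c' d' e' f' g' h' k' :
  mx33 a b c d e f g h k = mx33 a' b' c' d' e' f' g' h' k' ->
  [/\ a = a', b = b', c = c', d = d' & [/\ e = e', f = f', g = g', h = h' & k = k']].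
Proof.
move/matrixP=> H.
have H00 := H (@Ordinal 3 0 isT) (@Ordinal 3 0 isT).
have H01 := H (@Ordinal 3 0 isT) (@Ordinal 3 1 isT).
have H02 := H (@Ordinal 3 0 isT) (@Ordinal 3 2 isT).
have H10 := H (@Ordinal 3 1 isT) (@Ordinal 3 0 isT).
have H11 := H (@Ordinal 3 1 isT) (@Ordinal 3 1 isT).
have H12 := H (@Ordinal 3 1 isT) (@Ordinal 3 2 isT).
have H20 := H (@Ordinal 3 2 isT) (@Ordinal 3 0 isT).
have H21 := H (@Ordinal 3 2 isT) (@Ordinal 3 1 isT).
have H22 := H (@Ordinal 3 2 isT) (@Ordinal 3 2 isT).
rewrite !mxE /= in H00 H01 H02 H10 H11 H12 H20 H21 H22.
by split => //; split.
Qed.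

Lemma inord0_2 : (inord 0 : 'I_2) = ord0.
Proof. by apply/val_inj; rewrite /= inordK. Qed.
Lemma inord1_2 : (inord 1 : 'I_2) = ord_max.
Proof. by apply/val_inj; rewrite /= inordK. Qed.

Definition e00 (X : 'M[F]_2) := X ord0 ord0.
Definition e01 (X : 'M[F]_2) := X ord0 ord_max.
Definition e10 (X : 'M[F]_2) := X ord_max ord0.
Definition e11 (X : 'M[F]_2) := X ord_max ord_max.

Lemma blockD31 X : blockD 3 1 X = mx33 (e00 X) (e01 X) 0 (e10 X) (e11 X) 0 0 0 1.
Proof.
apply/matrixP => r s; rewrite !mxE.
case: r => [[|[|[|r]]] hr] //; case: s => [[|[|[|s]]] hs] //=;
  by rewrite ?inord0_2 ?inord1_2.
Qed.

Lemma blockD32 X : blockD 3 2 X = mx33 1 0 0 0 (e00 X) (e01 X) 0 (e10 X) (e11 X).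
Proof.
apply/matrixP => r s; rewrite !mxE.
case: r => [[|[|[|r]]] hr] //; case: s => [[|[|[|s]]] hs] //=;
  by rewrite ?inord0_2 ?inord1_2.
Qed.

Lemma mx22E X : X = mx22 (e00 X) (e01 X) (e10 X) (e11 X).
Proof.
apply/matrixP => r s; rewrite !mxE.
case: r => [[|[|r]] hr] //; case: s => [[|[|s]] hs] //=;
  by congr (X _ _); apply/val_inj.
Qed.

Lemma blockD_split m i (X : 'M[F]_2) : (1 <= i <= 2)%N ->
  blockD (3 + m) i X = block_mx (blockD 3 i X) 0 0 1%:M.
Proof.
move=> /andP [hi1 hi2]; apply/matrixP => r s.
case: (splitP r) => r' Hr; [have -> : r = lshift _ r' by apply/val_inj|have -> : r = rshift _ r' by apply/val_inj];
  case: (splitP s) => s' Hs; [have -> : s = lshift _ s' by apply/val_inj|have -> : s = rshift _ s' by apply/val_inj|have -> : s = lshift _ s' by apply/val_inj|have -> : s = rshift _ s' by apply/val_inj].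
- by rewrite block_mxEul !mxE /=.
- rewrite block_mxEur !mxE /=; case: ifP => H.
    by exfalso; move: H => /and4P []; have := ltn_ord r'; lia.
  by rewrite (_ : _ == _ = false) //; apply/negP => /eqP/(congr1 val) /=; have := ltn_ord r'; lia.

- rewrite block_mxEdl !mxE /=; case: ifP => H.
    by exfalso; move: H => /and4P []; have := ltn_ord s'; lia.
  by rewrite (_ : _ == _ = false) //; apply/negP => /eqP/(congr1 val) /=; have := ltn_ord s'; lia.
- rewrite block_mxEdr !mxE /=; case: ifP => H.
    by exfalso; move: H => /and4P []; lia.
  congr (_%:R); apply/eqP/eqP => [/(congr1 val) /= /eqP|->] //.
Qed.

Lemma blockD_split2 k (X : 'M[F]_2) : blockD (2 + k) 1 X = block_mx X 0 0 1%:M.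
Proof.
apply/matrixP => r s.
case: (splitP r) => r' Hr; [have -> : r = lshift _ r' by apply/val_inj|have -> : r = rshift _ r' by apply/val_inj];
  case: (splitP s) => s' Hs; [have -> : s = lshift _ s' by apply/val_inj|have -> : s = rshift _ s' by apply/val_inj|have -> : s = lshift _ s' by apply/val_inj|have -> : s = rshift _ s' by apply/val_inj].
- rewrite block_mxEul !mxE /= !subn0; case: ifP => H.
    by congr (X _ _); apply/val_inj; rewrite /= inordK.
  by exfalso; move: H; have := ltn_ord r'; have := ltn_ord s'; lia.
- rewrite block_mxEur !mxE /=; try (case: ifP => H; [by exfalso; move: H; have := ltn_ord r'; have := ltn_ord s'; lia|]).
  by rewrite (_ : _ == _ = false) //; apply/negP => /eqP/(congr1 val) /=; have := ltn_ord r'; lia.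
- rewrite block_mxEdl !mxE /=; try (case: ifP => H; [by exfalso; move: H; have := ltn_ord r'; have := ltn_ord s'; lia|]).
  by rewrite (_ : _ == _ = false) //; apply/negP => /eqP/(congr1 val) /=; have := ltn_ord s'; lia.
- rewrite block_mxEdr !mxE /=; try (case: ifP => H; [by exfalso; move: H; have := ltn_ord r'; have := ltn_ord s'; lia|]).
  congr (_%:R); apply/eqP/eqP => [/(congr1 val) /= /eqP|->] //.
Qed.

Lemma bmul m (A B : 'M[F]_3) :
  block_mx A 0 0 (1%:M : 'M_m) *m block_mx B 0 0 1%:M = block_mx (A *m B) 0 0 1%:M.
Proof.
by rewrite mulmx_block !mulmx0 !mul0mx !addr0 !add0r mulmx1.
Qed.

Lemma blockD1 n i : blockD n i (1%:M : 'M[F]_2) = 1%:M.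
Proof.
apply/matrixP => r s; rewrite !mxE; case: ifP => // /and4P [h1 h2 h3 h4].
congr ((nat_of_bool _)%:R); case: (r =P s) => [->|ne]; first by rewrite eqxx.
apply/negbTE/negP => /eqP/(congr1 val) /=; rewrite !inordK; try lia.
move: h1 h3; rewrite -!subn1 => h1 h3 h; apply: ne; apply: ord_inj; lia.
Qed.

End H.

Section H2.
Variable F : fieldType.
Lemma mx22_1 : mx22 (1 : F) 0 0 1 = 1%:M.
Proof.
apply/matrixP => r s; rewrite !mxE.
by case: r => [[|[|r]] hr] //; case: s => [[|[|s]] hs].
Qed.

Lemma eq0_from {u v w : F} : u = v -> w = u - v -> w = 0.
Proof. by move=> -> ->; rewrite subrr. Qed.

Lemma lin {u v w : F} : w = 0 -> u - v = w -> u = v.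
Proof. by move=> -> /eqP; rewrite subr_eq0 => /eqP. Qed.

Lemma case1 (a b c x y z w : F) : a != 0 -> c != 0 -> b != 0 ->
  a + b*c - 1 = 0 -> y*c - b*z = 0 -> x + b*z - 1 = 0 -> y + b*w - b = 0 ->
  [/\ a != 1, b = (1-a)/c, x = 1-(1-a)*(1-w), y = (1-a)/c*(1-w) & z = c*(1-w)].
Proof.
move=> anz cnz bnz E1 E2 E3 E4.
have bc : b * c = 1 - a by apply: (lin E1); ring.
have bdef : b = (1-a)/c by rewrite -bc mulfK.
have yE : y = b * (1 - w) by apply: (lin E4); ring.
have zE : z = c * (1 - w).
  by apply: (mulfI bnz); apply: esym; apply: (lin E2); rewrite yE; ring.
have xE : x = 1 - (1-a)*(1-w).
  by apply: (lin E3); rewrite zE -bc; ring.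
split => //; last by rewrite -bdef.
apply/eqP => a1; move: bc; rewrite a1 subrr => /eqP; rewrite mulf_eq0 (negbTE bnz) (negbTE cnz).
by [].
Qed.

Lemma case2 (b c d x y z w : F) : d != 0 -> c != 0 -> b != 0 ->
  b*c + d - 1 = 0 -> y*c - b*z = 0 -> b - x*b - y = 0 -> 1 - z*b - w = 0 ->
  [/\ d != 1, b = (1-d)/c, y = (1-d)/c*(1-x), z = c*(1-x) & w = 1-(1-d)*(1-x)].
Proof.
move=> dnz cnz bnz E1 E2 E3 E4.
have bc : b * c = 1 - d by apply: (lin E1); ring.
have bdef : b = (1-d)/c by rewrite -bc mulfK.
have yE : y = b * (1 - x) by apply: esym; apply: (lin E3); ring.
have zE : z = c * (1 - x).
  by apply: (mulfI bnz); apply: esym; apply: (lin E2); rewrite yE; ring.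
have wE : w = 1 - (1-d)*(1-x).
  by apply: esym; apply: (lin E4); rewrite zE -bc; ring.
split => //; last by rewrite -bdef.
apply/eqP => d1; move: bc; rewrite d1 subrr => /eqP; rewrite mulf_eq0 (negbTE bnz) (negbTE cnz).
by [].
Qed.

Lemma case3 (b c x y z w : F) : b != 0 ->
  y*c - b*z = 0 -> x*b - b*w = 0 -> z = c*y/b /\ w = x.
Proof.
move=> bnz E2 E3; split.
  have bz : b * z = y * c by apply: esym; apply: (lin E2); ring.
  by rewrite -[z](mulKf bnz) bz; field.
by apply: (mulfI bnz); apply: esym; apply: (lin E3); ring.
Qed.
End H2.

Lemma bunit (F : comUnitRingType) k (X : 'M[F]_2) :
  block_mx X 0 0 (1%:M : 'M_k) \in unitmx -> X \in unitmx.
Proof. by rewrite !unitmxE det_lblock det1 mulr1. Qed.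

Section H3.
Variable F : fieldType.
Lemma canc0 (u v : F) : u != 0 -> u * v = 0 -> v = 0.
Proof. by move=> /negbTE h /eqP; rewrite mulf_eq0 h => /eqP. Qed.
Lemma lnz (u v : F) : u * v = 1 -> u != 0.
Proof. by move=> h; apply/eqP => u0; move: h; rewrite u0 mul0r => /eqP; rewrite eq_sym oner_eq0. Qed.
Lemma rnz (u v : F) : v * u = 1 -> u != 0.
Proof. by rewrite mulrC; apply: lnz. Qed.
End H3.

Lemma equiv_id (F : comUnitRingType) n (S T S' T' : nat -> 'M[F]_n) :
  (forall i, S i = S' i) -> (forall i, T i = T' i) -> equiv_SM S T S' T'.
Proof.
move=> hS hT; exists 1%:M; split; first by rewrite unitmxE det1 unitr1.
move=> i _; rewrite !mul1mx !invmx1 !mulmx1; split; [exact: hS | exact: hT].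
Qed.

End Helpers.
Import Helpers.

Theorem theorem3p3 (R : realType) (n : nat) (M N : 'M[R[i]]_2) :
  (3 <= n)%N ->
  braid_rep (fun i => blockD n i M) ->
  nontrivial (fun i => blockD n i M) ->
  SM_rep (fun i => blockD n i M) (fun i => blockD n i N) ->
  nontrivial (fun i => blockD n i M) ->
  (   (exists a c t : R[i], c != 0 /\ a != 1 /\ a != 0 /\
         equiv_SM (fun i => blockD n i M) (fun i => blockD n i N)
                  (fun i => blockD n i (rho1 a c)) (fun i => blockD n i (tau1 a c t)))
   \/ (exists c d x : R[i], c != 0 /\ d != 1 /\ d != 0 /\
         equiv_SM (fun i => blockD n i M) (fun i => blockD n i N)
                  (fun i => blockD n i (rho2 c d)) (fun i => blockD n i (tau2 c d x)))
   \/ (exists b c x y : R[i], b != 0 /\ c != 0 /\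
         equiv_SM (fun i => blockD n i M) (fun i => blockD n i N)
                  (fun i => blockD n i (rho3 b c)) (fun i => blockD n i (tau3 b c x y)))) /\
  ((forall i, (1 <= i <= n - 1)%N -> blockD n i N \in unitmx) ->
     SB_rep (fun i => blockD n i M) (fun i => blockD n i N)).
Proof.
move=> Hn [HU HB] Hnt HSM _.
split; last first.
  move=> HT; split; first by move=> i hi; split; [exact: HU | exact: HT].
  by split; [exact: HB | case: HSM].
case: HSM => _ [_ [Hcomm Hrel]].
have [m Em] : exists m, n = (3 + m)%N by exists (n - 3)%N; lia.
subst n.
have HBr := (HB.1 1%N isT isT).
have HCo := (Hcomm 1%N isT).
have [HRe _] := (Hrel 1%N isT isT).
have s1M := @blockD_split _ m 1 M isT.
have s2M := @blockD_split _ m 2 M isT.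
have s1N := @blockD_split _ m 1 N isT.
have s2N := @blockD_split _ m 2 N isT.
move: HBr HCo HRe. rewrite /= s1M s2M s1N s2N.
rewrite !(@bmul _ m).
rewrite !blockD31 !blockD32.
rewrite !mx33_mul.
case/eq_block_mx => B _ _ _; case/eq_block_mx => C _ _ _; case/eq_block_mx => D _ _ _.
move/mx33_inj: B => [B00 B01 B02 B10 [B11 B12 B20 B21 B22]].
move/mx33_inj: C => [C00 C01 C02 C10 [C11 C12 C20 C21 C22]].
move/mx33_inj: D => [D00 D01 D02 D10 [D11 D12 D20 D21 D22]].
clear s1M s2M s1N s2N.
have HMu : M \in unitmx.
  have := HU 1%N isT; rewrite (@blockD_split2 _ (1+m) M).
  exact: bunit.
have V1 := mulmxV HMu; have V2 := mulVmx HMu.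
rewrite {1}[M]mx22E in V1; rewrite {2}[M]mx22E in V2.
move/matrixP: V1 => V1; move/matrixP: V2 => V2.
have U1 := V1 ord0 ord0; have U2 := V1 ord_max ord_max.
have U3 := V2 ord0 ord0; have U4 := V2 ord_max ord_max.
rewrite !mxE !big_ord_recr big_ord0 /= !mxE /= in U1.
rewrite !mxE !big_ord_recr big_ord0 /= !mxE /= in U2.
rewrite !mxE !big_ord_recr big_ord0 /= !mxE /= in U3.
rewrite !mxE !big_ord_recr big_ord0 /= !mxE /= in U4.
clear V1 V2.
set a := e00 M in B00 B01 B02 B10 B11 B12 B20 B21 B22 C00 C01 C02 C10 C11 C12 C20 C21 C22 D00 D01 D02 D10 D11 D12 D20 D21 D22 U1 U2 U3 U4 *.
set b := e01 M in B00 B01 B02 B10 B11 B12 B20 B21 B22 C00 C01 C02 C10 C11 C12 C20 C21 C22 D00 D01 D02 D10 D11 D12 D20 D21 D22 U1 U2 U3 U4 *.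
set c := e10 M in B00 B01 B02 B10 B11 B12 B20 B21 B22 C00 C01 C02 C10 C11 C12 C20 C21 C22 D00 D01 D02 D10 D11 D12 D20 D21 D22 U1 U2 U3 U4 *.
set d := e11 M in B00 B01 B02 B10 B11 B12 B20 B21 B22 C00 C01 C02 C10 C11 C12 C20 C21 C22 D00 D01 D02 D10 D11 D12 D20 D21 D22 U1 U2 U3 U4 *.
set x := e00 N in B00 B01 B02 B10 B11 B12 B20 B21 B22 C00 C01 C02 C10 C11 C12 C20 C21 C22 D00 D01 D02 D10 D11 D12 D20 D21 D22 *.
set y := e01 N in B00 B01 B02 B10 B11 B12 B20 B21 B22 C00 C01 C02 C10 C11 C12 C20 C21 C22 D00 D01 D02 D10 D11 D12 D20 D21 D22 *.
set z := e10 N in B00 B01 B02 B10 B11 B12 B20 B21 B22 C00 C01 C02 C10 C11 C12 C20 C21 C22 D00 D01 D02 D10 D11 D12 D20 D21 D22 *.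
set w := e11 N in B00 B01 B02 B10 B11 B12 B20 B21 B22 C00 C01 C02 C10 C11 C12 C20 C21 C22 D00 D01 D02 D10 D11 D12 D20 D21 D22 *.

have E1 : a*(a+b*c-1) = 0 by apply: (eq0_from B00); ring.
have E2 : a*b*d = 0 by apply: (eq0_from B01); ring.
have E3 : a*c*d = 0 by apply: (eq0_from B10); ring.
have E4 : d*(b*c+d-1) = 0 by apply: (eq0_from (esym B22)); ring.
have F1 : y*c - b*z = 0 by apply: (eq0_from C00); ring.
have F2 : x*b + y*d - (a*y + b*w) = 0 by apply: (eq0_from C01); ring.
have G1 : a*(x + b*z - 1) = 0 by apply: (eq0_from D00); ring.
have G2 : a*(y + b*w - b) = 0 by apply: (eq0_from D01); ring.
have G3 : d*(b - x*b - y) = 0 by apply: (eq0_from D12); ring.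
have G4 : d*(1 - z*b - w) = 0 by apply: (eq0_from D22); ring.
clear B00 B01 B02 B10 B11 B12 B20 B21 B22 C00 C01 C02 C10 C11 C12 C20 C21 C22 D00 D01 D02 D10 D11 D12 D20 D21 D22.
have [a0|anz] := eqVneq a 0; have [d0|dnz] := eqVneq d 0.
-
  have bnz : b != 0 by apply: (@lnz _ b (invmx M ord_max ord0)); move: U1; rewrite a0 mul0r !add0r.
  have cnz : c != 0 by apply: (@rnz _ c (invmx M ord0 ord_max)); move: U3; rewrite a0 mulr0 !add0r.
  have F2' : x*b - b*w = 0 by rewrite -F2 a0 d0; ring.
  have [zE wE] := case3 bnz F1 F2'.
  right; right; exists b, c, x, y; split => //; split => //.
  apply: equiv_id => i /=; congr blockD.
    by rewrite [LHS]mx22E -/a -/b -/c -/d a0 d0.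
  by rewrite [LHS]mx22E -/x -/y -/z -/w zE wE.
-
  have bnz : b != 0 by apply: (@lnz _ b (invmx M ord_max ord0)); move: U1; rewrite a0 mul0r !add0r.
  have cnz : c != 0 by apply: (@rnz _ c (invmx M ord0 ord_max)); move: U3; rewrite a0 mulr0 !add0r.
  have [d1 bdef yE zE wE] := case2 dnz cnz bnz (canc0 dnz E4) F1 (canc0 dnz G3) (canc0 dnz G4).
  right; left; exists c, d, x; split => //; split => //; split => //.
  apply: equiv_id => i /=; congr blockD.
    by rewrite [LHS]mx22E -/a -/b -/c -/d a0 bdef.
  by rewrite [LHS]mx22E -/x -/y -/z -/w yE zE wE.
-
  have cnz : c != 0 by apply: (@lnz _ c (invmx M (widen_ord (leqnSn 1) ord_max) ord_max)); move: U2; rewrite d0 mul0r !addr0 add0r.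
  have bnz : b != 0 by apply: (@rnz _ b (invmx M ord_max (widen_ord (leqnSn 1) ord_max))); move: U4; rewrite d0 mulr0 !addr0 add0r.
  have [a1 bdef xE yE zE] := case1 anz cnz bnz (canc0 anz E1) F1 (canc0 anz G1) (canc0 anz G2).
  left; exists a, c, w; split => //; split => //; split => //.
  apply: equiv_id => i /=; congr blockD.
    by rewrite [LHS]mx22E -/a -/b -/c -/d d0 bdef.
  by rewrite [LHS]mx22E -/x -/y -/z -/w xE yE zE.
-
  exfalso.
  have b0 : b = 0.
    by move/eqP: E2; rewrite !mulf_eq0 (negbTE anz) (negbTE dnz) orbF => /eqP.
  have c0 : c = 0.
    by move/eqP: E3; rewrite !mulf_eq0 (negbTE anz) (negbTE dnz) orbF => /eqP.
  have a1 : a = 1.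
    by apply: (lin (canc0 anz E1)); rewrite b0; ring.
  have d1 : d = 1.
    by apply: (lin (canc0 dnz E4)); rewrite b0; ring.
  have M1 : M = 1%:M by rewrite [LHS]mx22E -/a -/b -/c -/d a1 b0 c0 d1 mx22_1.
  by case: Hnt => i [_]; rewrite /= M1 blockD1 eqxx.
Qed.
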